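(* Let $f:\mathbb{R}^d\to\mathbb{R}$ be convex and differentiable with $L$-Lipschitz gradient ($\|\nabla f(x)-\nabla f(y)\|\le L\|x-y\|$ for all $x,y$), and suppose $X^*\neq\emptyset$. Run the Proximal Bundle Method with parameter $\beta\in(0,1)$ and constant stepsize $\rho_k=\rho>0$. Let $D^2=\sup_k\mathrm{dist}(x_k,X^* )^2$ and assume $0<D^2<\infty$. Then for any $0<\epsilon\le f(x_0)-f^*$, the number of descent steps taken before an $\epsilon$-minimizer is found is at most $$N:=\frac{2\rho D^2}{\beta\epsilon}+\left\lceil\frac{2\log\left(\frac{f(x_0)-f^*}{\rho D^2}\right)}{\beta}\right\rceil_+,$$ and the number of null steps taken before then is at most $$\frac{16(L+\rho)^3}{(1-\beta)^2\rho^3}\left(N+1\right).$$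
   Context: Throughout, $f:\mathbb{R}^d\to\mathbb{R}$ is a proper closed convex function attaining its minimum $f^*=\inf f$ on the nonempty set $X^*=\{x: f(x)=f^*\}$; $\mathrm{dist}(x,S)=\inf_{y\in S}\|x-y\|$; $\partial f(x)$ is the convex subdifferential; $\lceil a\rceil_+=\max\{\lceil a\rceil,0\}$. A subgradient oracle returns, for any $x$, the value $f(x)$ and some $g(x)\in\partial f(x)$. Proximal Bundle Method: fix $\beta\in(0,1)$, $x_0=z_0\in\mathbb{R}^d$, $g_0=g(x_0)$, and the initial model $f_0(x)=f(x_0)+\langle g_0,x-x_0\rangle$. At iteration $k\ge0$, given a convex model $f_k:\mathbb{R}^d\to\mathbb{R}$ and stepsize $\rho_k>0$, compute $z_{k+1}=\operatorname{argmin}_z f_k(z)+\frac{\rho_k}{2}\|z-x_k\|^2$. If $\beta(f(x_k)-f_k(z_{k+1}))\le f(x_k)-f(z_{k+1})$, iteration $k$ is a descent step and $x_{k+1}=z_{k+1}$; otherwise it is a null step and $x_{k+1}=x_k$. Then a new convex model $f_{k+1}$ and stepsize $\rho_{k+1}$ are chosen satisfying, with $g_{k+1}=g(z_{k+1})$ and $s_{k+1}=\rho_k(x_k-z_{k+1})$: (1) $f_{k+1}(x)\le f(x)$ for all $x$; (2) $f_{k+1}(x)\ge f(z_{k+1})+\langle g_{k+1},x-z_{k+1}\rangle$ for all $x$; (3) if iteration $k$ was a null step, $f_{k+1}(x)\ge f_k(z_{k+1})+\langle s_{k+1},x-z_{k+1}\rangle$ for all $x$; (4) if iteration $k$ was a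 null step, $\rho_{k+1}\ge\rho_k$. An $\epsilon$-minimizer is a point $x$ with $f(x)-f^*\le\epsilon$. *)

(* Defs.v *)
From HB Require Import structures.
From mathcomp Require Import all_boot all_order all_algebra.
From mathcomp Require Import all_classical all_reals.
From mathcomp Require Import exp.
Set Implicit Arguments. Unset Strict Implicit. Unset Printing Implicit Defensive.
Import Order.TTheory GRing.Theory Num.Theory.
Local Open Scope classical_set_scope.
Local Open Scope ring_scope.

Section PBM.
Variables (R : realType) (d : nat).
Notation V := 'rV[R]_d.

Definition dot (u v : V) : R := \sum_(i < d) u ord0 i * v ord0 i.
Definition enorm (u : V) : R := Num.sqrt (dot u u).

Definition convex_fun (f : V -> R) : Prop :=
  forall (x y : V) (t : R), 0 <= t <= 1 ->
    f (t *: x + (1 - t) *: y) <= t * f x + (1 - t) * f y.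

Definition is_subgrad (f : V -> R) (x g : V) : Prop :=
  forall y, f x + dot g (y - x) <= f y.

Definition is_gradient (f : V -> R) (grad : V -> V) : Prop :=
  forall x (eps : R), 0 < eps -> exists2 delta : R, 0 < delta &
    forall h : V, enorm h < delta ->
      `| f (x + h) - f x - dot (grad x) h | <= eps * enorm h.

Definition fstar (f : V -> R) : R := inf (range f).
Definition Xstar (f : V -> R) : set V := [set x | f x = fstar f].
Definition attains_min (f : V -> R) : Prop := exists xs, forall y, f xs <= f y.
Definition dist (x : V) (S : set V) : R := inf [set enorm (x - y) | y in S].

Definition is_descent (f : V -> R) (beta : R) (x z : nat -> V)
  (model : nat -> V -> R) (k : nat) : bool :=
  beta * (f (x k) - model k (z k.+1)) <= f (x k) - f (z k.+1).

(* The Proximal Bundle Method with constant stepsize rho_k = rho,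
   subgradient oracle g, iterates x_k, proximal points z_k, models f_k *)
Definition PBM_run (f : V -> R) (g : V -> V) (beta rho : R)
  (x z : nat -> V) (model : nat -> V -> R) : Prop :=
  x 0%N = z 0%N /\
  [/\ (forall y, model 0%N y = f (x 0%N) + dot (g (x 0%N)) (y - x 0%N)),
      (forall k, convex_fun (model k)),
      (forall k y, model k (z k.+1) + rho / 2 * enorm (z k.+1 - x k) ^+ 2
                   <= model k y + rho / 2 * enorm (y - x k) ^+ 2),
      (forall k, x k.+1 = if is_descent f beta x z model k then z k.+1 else x k) &
      (forall k,
        [/\ (forall y, model k.+1 y <= f y),
            (forall y, f (z k.+1) + dot (g (z k.+1)) (y - z k.+1) <= model k.+1 y) &
            (~~ is_descent f beta x z model k ->
              forall y, model k (z k.+1) + dot (rho *: (x k - z k.+1)) (y - z k.+1)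
                        <= model k.+1 y)])].
(* condition (4) rho_{k+1} >= rho_k holds trivially for a constant stepsize *)

Definition ceil_pos (a : R) : R := (Num.max (Num.ceil a) 0%Z)%:~R.

End PBM.

(* Main.v *)
Require Import Defs.
From HB Require Import structures.
From mathcomp Require Import all_boot all_order all_algebra.
From mathcomp Require Import all_classical all_reals.
From mathcomp Require Import exp sequences.
From mathcomp Require Import ring lra.
Set Implicit Arguments. Unset Strict Implicit. Unset Printing Implicit Defensive.
Import Order.TTheory GRing.Theory Num.Theory.
Local Open Scope classical_set_scope.
Local Open Scope ring_scope.

Lemma ceil_pos_props (R : realType) (y : R) :
  [/\ y <= ceil_pos y, 0 <= ceil_pos y &
      forall n : nat, n%:R < y -> n.+1%:R <= ceil_pos y].
Proof.
rewrite /ceil_pos; split.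
- apply: (le_trans (Num.Theory.ceil_ge y)); by rewrite ler_int le_max lexx.
- by rewrite ler0z le_max lexx orbT.
move=> n Hn.
have H1 : ((n:int) < Num.ceil y)%R.
  rewrite -(ltr_int R); apply: (lt_le_trans Hn); exact: Num.Theory.ceil_ge.
have H2 : ((n:int) + 1 <= Num.max (Num.ceil y) 0)%R.
  by rewrite lezD1; apply: (lt_le_trans H1); rewrite le_max lexx.
move: H2; rewrite -(ler_int R) intrD /= => H2.
by apply: le_trans H2; rewrite -natr1.
Qed.

Lemma ln_count (R : realType) (beta a h0 : R) (n : nat) :
  0 < beta -> beta < 1 -> 0 < a -> 0 < h0 ->
  a <= (1 - beta / 2) ^+ n * h0 -> n%:R * (beta / 2) <= ln (h0 / a).
Proof.
move=> Hb0 Hb1 Ha Hh H.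
have Hq : 0 <= 1 - beta / 2 by lra.
have E1 : 1 - beta / 2 <= expR (- (beta / 2)) by have := expR_ge1Dx (- (beta / 2)); rewrite -/(1 - beta / 2).
have E2 : (1 - beta / 2) ^+ n <= expR (n%:R * - (beta / 2)).
  by rewrite expRM_natl; apply: lerXn2r => //; rewrite nnegrE // expR_ge0.
have E3 : a <= expR (n%:R * - (beta / 2)) * h0.
  by apply: (le_trans H); rewrite ler_pM2r.
have Hp : 0 < expR (n%:R * - (beta / 2)) * h0 by rewrite mulr_gt0 // expR_gt0.
have := E3; rewrite -ler_ln ?posrE // lnM ?posrE ?expR_gt0 // expRK => E4.
rewrite ln_div ?posrE //; lra.
Qed.

Lemma ln_count_lt (R : realType) (beta a h0 : R) (n : nat) :
  0 < beta -> beta < 1 -> 0 < a -> 0 < h0 -> (0 < n)%N ->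
  a <= (1 - beta / 2) ^+ n * h0 -> n%:R * (beta / 2) < ln (h0 / a).
Proof.
move=> Hb0 Hb1 Ha Hh Hn H.
have Hq : 0 <= 1 - beta / 2 by lra.
have E1 : 1 - beta / 2 < expR (- (beta / 2)).
  have := @expR_gt1Dx R (- (beta / 2)); rewrite -/(1 - beta / 2); apply.
  by rewrite oppr_eq0 gt_eqF // divr_gt0.
have E2 : (1 - beta / 2) ^+ n < expR (n%:R * - (beta / 2)).
  by rewrite expRM_natl ltrXn2r // -lt0n.
have E3 : a < expR (n%:R * - (beta / 2)) * h0.
  by apply: (le_lt_trans H); rewrite ltr_pM2r.
have Hp : 0 < expR (n%:R * - (beta / 2)) * h0 by rewrite mulr_gt0 // expR_gt0.
have := E3; rewrite -ltr_ln ?posrE // lnM ?posrE ?expR_gt0 // expRK => E4.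
rewrite ln_div ?posrE //; lra.
Qed.

Lemma aux_E3 (R : realType) (r A P B : R) :
  r / 2 * (A + 2 * P + B) = r / 2 * A + r * P + r / 2 * B.
Proof. have H2 : (2 : R) != 0 by rewrite gt_eqF. by field. Qed.

Lemma aux_G (R : realType) (r AA AW WW : R) : 0 < r ->
  0 <= AA + 2 * r * AW + r ^+ 2 * WW -> - (AA / (2 * r)) <= AW + r / 2 * WW.
Proof.
move=> Hr H.
have H2 : 0 < 2 * r by rewrite mulr_gt0.
rewrite -(ler_pM2l H2).
have E1 : 2 * r * - (AA / (2 * r)) = - AA by field; rewrite gt_eqF.
have E2 : 2 * r * (AW + r / 2 * WW) = 2 * r * AW + r ^+ 2 * WW.
  have H22 : (2 : R) != 0 by rewrite gt_eqF.
  by field.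
rewrite E1 E2; move: H; move: (2 * r * AW) (r ^+ 2 * WW) => X Y; lra.
Qed.

Lemma aux_c0 (R : realType) (L r AA : R) : 0 <= L -> 0 < r ->
  - (1 / (2 * L + r)) * AA + (L + r / 2) * ((1 / (2 * L + r)) ^+ 2 * AA)
  = - (AA / (2 * (2 * L + r))).
Proof.
move=> HL Hr.
have H : 2 * L + r != 0 by rewrite gt_eqF //; lra.
have H22 : (2 : R) != 0 by rewrite gt_eqF.
by field.
Qed.

Lemma aux_final (R : realType) (L r b AA n1 : R) : 0 <= L -> 0 < r -> 0 < b -> b < 1 ->
  0 < AA -> 0 <= n1 ->
  n1 * (r * (1 - b) * (AA / (2 * (2 * L + r)))) <= L * AA / r ->
  n1 + 1 <= 16 * (L + r) ^+ 3 / ((1 - b) ^+ 2 * r ^+ 3).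
Proof.
move=> HL Hr Hb0 Hb1 HA Hn H.
have Hc : 0 < 2 * (2 * L + r) by apply: mulr_gt0 => //; lra.
have Hb : 0 < 1 - b by lra.
have Hr0 : r != 0 by rewrite gt_eqF.
have Hc0 : 2 * L + r != 0 by rewrite gt_eqF //; lra.
have H22 : (2 : R) != 0 by rewrite gt_eqF.
have H1 : n1 * (r ^+ 2 * (1 - b)) <= 2 * L * (2 * L + r).
  have E1 : n1 * (r * (1 - b) * (AA / (2 * (2 * L + r)))) =
     (n1 * (r ^+ 2 * (1 - b))) * (AA / (r * (2 * (2 * L + r)))).
    by field; rewrite ?Hr0 ?Hc0 ?H22.
  have E2 : L * AA / r = (2 * L * (2 * L + r)) * (AA / (r * (2 * (2 * L + r)))).
    by field; rewrite ?Hr0 ?Hc0 ?H22.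
  move: H; rewrite E1 E2 ler_pM2r //; apply: divr_gt0 => //; exact: mulr_gt0.
have Hd : 0 < (1 - b) ^+ 2 * r ^+ 3 by rewrite mulr_gt0 // exprn_gt0.
rewrite ler_pdivlMr //.
have E3 : (n1 + 1) * ((1 - b) ^+ 2 * r ^+ 3) =
   ((1 - b) * r) * (n1 * (r ^+ 2 * (1 - b))) + (1 - b) ^+ 2 * r ^+ 3 by ring.
rewrite E3.
have H2 : ((1 - b) * r) * (n1 * (r ^+ 2 * (1 - b))) <= r * (2 * L * (2 * L + r)).
  apply: (le_trans (ler_wpM2l _ H1)); first by apply: mulr_ge0; lra.
  rewrite ler_wpM2r //; first by apply: mulr_ge0; [lra|]; apply: addr_ge0; lra.
  by rewrite ler_piMl; lra.
have H3 : (1 - b) ^+ 2 * r ^+ 3 <= r ^+ 3.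
  rewrite ler_piMl ?exprn_ge0 ?ltW //.
  by rewrite expr2; nra.
have H4 : r * (2 * L * (2 * L + r)) + r ^+ 3 <= 16 * (L + r) ^+ 3.
  have E : 16 * (L + r) ^+ 3 - (r * (2 * L * (2 * L + r)) + r ^+ 3) =
    16 * L ^+ 3 + 44 * (L ^+ 2 * r) + 46 * (L * r ^+ 2) + 15 * r ^+ 3 by ring.
  rewrite -subr_ge0 E.
  have := exprn_ge0 3 HL; have := exprn_ge0 3 (ltW Hr).
  have := mulr_ge0 (exprn_ge0 2 HL) (ltW Hr); have := mulr_ge0 HL (exprn_ge0 2 (ltW Hr)).
  move: (L ^+ 3) (r ^+ 3) (L ^+ 2 * r) (L * r ^+ 2) => A B C D; lra.
move: H2 H3 H4; move: (((1 - b) * r) * (n1 * (r ^+ 2 * (1 - b)))) ((1 - b) ^+ 2 * r ^+ 3)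
   (r * (2 * L * (2 * L + r))) (r ^+ 3) (16 * (L + r) ^+ 3) => A B C D E; lra.
Qed.

Section Vec.
Variables (R : realType) (d : nat).
Local Notation V := 'rV[R]_d.
Local Notation dot := (@dot R d).
Local Notation enorm := (@enorm R d).

Lemma dotC (u v : V) : dot u v = dot v u.
Proof. by rewrite /Defs.dot; apply: eq_bigr => i _; rewrite mulrC. Qed.

Lemma dotDl (u v w : V) : dot (u + v) w = dot u w + dot v w.
Proof. by rewrite /Defs.dot -big_split; apply: eq_bigr => i _; rewrite !mxE mulrDl. Qed.

Lemma dotZl (a : R) (u w : V) : dot (a *: u) w = a * dot u w.
Proof. by rewrite /Defs.dot mulr_sumr; apply: eq_bigr => i _; rewrite !mxE mulrA. Qed.

Lemma dotNl (u w : V) : dot (- u) w = - dot u w.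
Proof. by rewrite -scaleN1r dotZl mulN1r. Qed.

Lemma dotBl (u v w : V) : dot (u - v) w = dot u w - dot v w.
Proof. by rewrite dotDl dotNl. Qed.

Lemma dotDr (u v w : V) : dot w (u + v) = dot w u + dot w v.
Proof. by rewrite dotC dotDl !(dotC w). Qed.
Lemma dotZr (a : R) (u w : V) : dot w (a *: u) = a * dot w u.
Proof. by rewrite dotC dotZl dotC. Qed.
Lemma dotNr (u w : V) : dot w (- u) = - dot w u.
Proof. by rewrite dotC dotNl dotC. Qed.
Lemma dotBr (u v w : V) : dot w (u - v) = dot w u - dot w v.
Proof. by rewrite dotDr dotNr. Qed.

Lemma dot_ge0 (u : V) : 0 <= dot u u.
Proof. by rewrite /Defs.dot; apply: sumr_ge0 => i _; rewrite -expr2 sqr_ge0. Qed.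

Lemma dot0_eq (u : V) : dot u u = 0 -> u = 0.
Proof.
move=> H; apply/rowP => i; rewrite mxE.
have H' : \sum_(j < d | true) (u ord0 j) ^+ 2 = 0.
  by rewrite -[RHS]H /Defs.dot; apply: eq_bigr => j _; rewrite expr2.
have := @psumr_eq0P _ _ xpredT (fun j => u ord0 j ^+ 2) (fun j _ => sqr_ge0 _) H' i isT.
move/eqP; rewrite sqrf_eq0 => /eqP ->.
by case: i.
Qed.

Lemma enorm_sq (u : V) : enorm u ^+ 2 = dot u u.
Proof. by rewrite /Defs.enorm sqr_sqrtr // dot_ge0. Qed.

Lemma enorm_ge0 (u : V) : 0 <= enorm u.
Proof. exact: sqrtr_ge0. Qed.

Lemma dot0l (u : V) : dot 0 u = 0.
Proof. by rewrite -(scale0r (0:V)) dotZl mul0r. Qed.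

Lemma cauchy_schwarz (u v : V) : dot u v ^+ 2 <= dot u u * dot v v.
Proof.
have [H0|Hpos] := eqVneq (dot u u) 0.
  by rewrite (dot0_eq H0) dot0l expr0n /= dot0l mul0r.
have Hp : 0 < dot u u by rewrite lt0r Hpos dot_ge0.
set t := dot u v / dot u u.
have := dot_ge0 (t *: u - v).
rewrite !(dotBl, dotBr, dotZl, dotZr) (dotC v u).
rewrite /t => H.
have : 0 <= dot u u * dot v v - dot u v ^+ 2.
  have E : dot u u * dot v v - dot u v ^+ 2 = dot u u *
    (dot u v / dot u u * (dot u v / dot u u * dot u u - dot u v) -
     (dot u v / dot u u * dot u v - dot v v)).
    by field; rewrite Hpos.
  by rewrite E mulr_ge0 // ltW.
by rewrite subr_ge0.
Qed.

Lemma dot_le_lip (a b : V) (L : R) : 0 <= L -> enorm a <= L * enorm b ->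
  dot a b <= L * dot b b.
Proof.
move=> HL H.
have H1 : dot a a <= L ^+ 2 * dot b b.
  rewrite -!enorm_sq -exprMn; apply: lerXn2r => //; rewrite nnegrE ?enorm_ge0 //.
  by rewrite mulr_ge0 // enorm_ge0.
have H2 := cauchy_schwarz a b.
have Hb := dot_ge0 b. have Ha := dot_ge0 a.
have H3 : dot a b ^+ 2 <= (L * dot b b) ^+ 2.
  apply: (le_trans H2); rewrite exprMn expr2 mulrA; exact: ler_wpM2r.
have [Hn|Hp] := lerP (dot a b) 0.
  by apply: (le_trans Hn); rewrite mulr_ge0.
by rewrite -(ler_pXn2r (n:=2)) // ?nnegrE ?mulr_ge0 // ltW.
Qed.

Lemma enormZ (t : R) (u : V) : 0 <= t -> enorm (t *: u) = t * enorm u.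
Proof.
move=> Ht; rewrite /Defs.enorm dotZl dotZr mulrA -expr2 sqrtrM ?sqr_ge0 //.
by rewrite sqrtr_sqr ger0_norm.
Qed.

End Vec.

Section Main.
Variables (R : realType) (d : nat) (f : 'rV[R]_d -> R)
  (grad : 'rV[R]_d -> 'rV[R]_d) (L : R) (g : 'rV[R]_d -> 'rV[R]_d)
  (beta rho : R) (x z : nat -> 'rV[R]_d) (model : nat -> 'rV[R]_d -> R).
Hypothesis Hf : convex_fun f.
Hypothesis Hgrad : is_gradient f grad.
Hypothesis HL : 0 <= L.
Hypothesis Hlip : forall u v, enorm (grad u - grad v) <= L * enorm (u - v).
Hypothesis Hsub : forall u, is_subgrad f u (g u).
Hypothesis Hb0 : 0 < beta.
Hypothesis Hb1 : beta < 1.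
Hypothesis Hrho : 0 < rho.
Hypothesis Hrun : PBM_run f g beta rho x z model.
Local Notation V := 'rV[R]_d.
Local Notation dot := (@dot R d).
Local Notation enorm := (@enorm R d).

Lemma g_grad u : g u = grad u.
Proof.
apply/eqP; rewrite -subr_eq0; apply/eqP; set v := g u - grad u.
apply: dot0_eq; apply/eqP; apply/negPn/negP => Hne.
have Hp : 0 < dot v v by rewrite lt0r Hne dot_ge0.
have He : 0 < enorm v by rewrite /Defs.enorm sqrtr_gt0.
have Hep : 0 < enorm v / 2 by rewrite divr_gt0.
have [delta Hd Hdel] := Hgrad u Hep.
set t := delta / (2 * enorm v).
have Ht : 0 < t by rewrite /t divr_gt0 // mulr_gt0.
have Hh : enorm (t *: v) = delta / 2.
  by rewrite enormZ ?ltW // /t; field; rewrite gt_eqF.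
have Hlt : delta / 2 < delta by lra.
have := Hdel (t *: v); rewrite Hh => /(_ Hlt) Habs.
have Hs : f u + dot (g u) (t *: v) <= f (u + t *: v).
  by have := Hsub u (u + t *: v); rewrite (addrC u) addrK.
have H1 := le_trans (ler_norm _) Habs.
have Hdv : dot v (t *: v) = t * enorm v ^+ 2 by rewrite dotZr enorm_sq.
have E : dot (g u) (t *: v) = dot (grad u) (t *: v) + dot v (t *: v).
  by rewrite /v dotBl; ring.
have : t * enorm v ^+ 2 <= enorm v / 2 * (delta / 2).
  rewrite -Hdv; move: H1 Hs; rewrite E; lra.
have Hh2 : delta / 2 = t * enorm v by rewrite -Hh enormZ // ltW.
rewrite Hh2 => Hc.
have : t * enorm v ^+ 2 <= t * enorm v ^+ 2 / 2 by move: Hc; rewrite expr2; lra.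
have : 0 < t * enorm v ^+ 2 by rewrite mulr_gt0 // exprn_gt0.
lra.
Qed.

Hypothesis Hmin : attains_min f.
Hypothesis Hub : has_ubound (range (fun k => dist (x k) (Xstar f) ^+ 2)).
Local Notation fs := (fstar f).
Local Notation D2 := (sup (range (fun k => dist (x k) (Xstar f) ^+ 2))).

Lemma run_x0 : x 0%N = z 0%N. Proof. by case: Hrun. Qed.
Lemma run_m0 y : model 0%N y = f (x 0%N) + dot (g (x 0%N)) (y - x 0%N).
Proof. by case: Hrun => _ [H _ _ _ _]. Qed.
Lemma run_arg k y : model k (z k.+1) + rho / 2 * enorm (z k.+1 - x k) ^+ 2
                   <= model k y + rho / 2 * enorm (y - x k) ^+ 2.
Proof. by case: Hrun => _ [_ _ H _ _]. Qed.
Lemma run_x k : x k.+1 = if is_descent f beta x z model k then z k.+1 else x k.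
Proof. by case: Hrun => _ [_ _ _ H _]. Qed.
Lemma run_c1 k y : model k.+1 y <= f y.
Proof. by case: Hrun => _ [_ _ _ _ H]; case: (H k) => H1 _ _. Qed.
Lemma run_c2 k y : f (z k.+1) + dot (g (z k.+1)) (y - z k.+1) <= model k.+1 y.
Proof. by case: Hrun => _ [_ _ _ _ H]; case: (H k) => _ H1 _. Qed.
Lemma run_c3 k y : ~~ is_descent f beta x z model k ->
  model k (z k.+1) + dot (rho *: (x k - z k.+1)) (y - z k.+1) <= model k.+1 y.
Proof. by case: Hrun => _ [_ _ _ _ H] Hn; case: (H k) => _ _ H1; apply: H1. Qed.

Lemma model_le k y : model k y <= f y.
Proof.
case: k => [|k]; last exact: run_c1.
by rewrite run_m0; have := Hsub (x 0%N) y.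
Qed.

Lemma arg_f k y : model k (z k.+1) + rho / 2 * dot (z k.+1 - x k) (z k.+1 - x k)
                   <= f y + rho / 2 * dot (y - x k) (y - x k).
Proof.
rewrite -!enorm_sq; apply: (le_trans (run_arg k y)).
by rewrite lerD2r model_le.
Qed.

Lemma smooth_ub p q : f q <= f p + dot (g p) (q - p) + L * dot (q - p) (q - p).
Proof.
have H1 := Hsub q p.
have H2 : dot (g q - g p) (q - p) <= L * dot (q - p) (q - p).
  apply: dot_le_lip => //; rewrite !g_grad; exact: Hlip.
have E : dot (g q) (p - q) = - dot (g p) (q - p) - dot (g q - g p) (q - p).
  by rewrite dotBl -(opprB q p) dotNr; ring.
move: H1 H2; rewrite E; lra.
Qed.

Lemma fstar_prop : (exists xs, f xs = fs) /\ forall y, fs <= f y.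
Proof.
case: Hmin => xs Hxs.
have Hlb : has_lbound (range f) by exists (f xs) => _ [y _ <-].
have E : fs = f xs.
  apply/eqP; rewrite eq_le; apply/andP; split.
    by apply: ge_inf => //; exists xs.
  by apply: lb_le_inf; [exists (f xs); exists xs | move=> _ [y _ <-]].
split; first by exists xs.
by move=> y; rewrite E.
Qed.

Lemma fs_le y : fs <= f y. Proof. by case: fstar_prop. Qed.

Lemma dotN (u : V) : dot (- u) (- u) = dot u u.
Proof. by rewrite dotNl dotNr opprK. Qed.

Lemma dist_near k eta : 0 < eta -> exists xs, f xs = fs /\
  dot (xs - x k) (xs - x k) <= D2 + eta.
Proof.
move=> He.
set S := [set enorm (x k - y) | y in Xstar f].
have HD : dist (x k) (Xstar f) ^+ 2 <= D2.
  by apply: ub_le_sup => //; exists k.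
have [[xs Hxs] _] := fstar_prop.
have Hne : S !=set0 by exists (enorm (x k - xs)); exists xs.
have Hlb : has_lbound S by exists 0 => _ [y _ <-]; exact: enorm_ge0.
set dd := dist (x k) (Xstar f).
have Hdd : 0 <= dd by apply: lb_le_inf => // _ [y _ <-]; exact: enorm_ge0.
set c := 2 * dd + 1.
have Hc : 0 < c by rewrite /c; lra.
set e' := eta / (c + eta).
have He' : 0 < e' by rewrite /e' divr_gt0 //; lra.
have He1 : e' <= 1 by rewrite /e' ler_pdivrMr; lra.
have Hec : e' * c <= eta.
  by rewrite /e' mulrAC ler_pdivrMr; [nra | lra].
have [_ [y Hy <-] Hlt] : exists2 v, S v & v < dd + e'.
  by apply: inf_lt => //; rewrite /dd /Defs.dist; lra.
exists y; split; first exact: Hy.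
rewrite -(opprB (x k) y) dotN -enorm_sq.
have Hn := enorm_ge0 (x k - y).
have : enorm (x k - y) ^+ 2 <= (dd + e') ^+ 2.
  by apply: lerXn2r; rewrite ?nnegrE //; [lra | exact: ltW].
rewrite /c in Hec; move: HD; rewrite -/dd; nra.
Qed.

Lemma Delta_lb k t : 0 <= t <= 1 ->
  t * (f (x k) - fs) - rho / 2 * t ^+ 2 * D2 <= f (x k) - model k (z k.+1).
Proof.
move=> /andP [Ht0 Ht1].
apply/ler_addgt0Pr => e He.
have He2 : 0 < 2 * e / rho by rewrite divr_gt0 // mulr_gt0.
have [xs [Hxs Hd]] := dist_near k He2.
set y := t *: xs + (1 - t) *: x k.
have Ey : y - x k = t *: (xs - x k).
  by apply/rowP => i; rewrite /y !mxE; ring.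
have Hc := Hf xs (x k) (ltac:(by rewrite Ht0 Ht1) : 0 <= t <= 1).
rewrite -/y Hxs in Hc.
have Ha := arg_f k y.
rewrite Ey dotZl dotZr in Ha.
have Hz := dot_ge0 (z k.+1 - x k).
have Hq := dot_ge0 (xs - x k).
have Hrt : rho / 2 * (t * (t * dot (xs - x k) (xs - x k))) <=
           rho / 2 * t ^+ 2 * D2 + e.
  have H1 : t * (t * dot (xs - x k) (xs - x k)) <= t ^+ 2 * (D2 + 2 * e / rho).
    by rewrite mulrA -expr2 ler_wpM2l // exprn_ge0.
  have H2 : t ^+ 2 * (2 * e / rho) <= 2 * e / rho.
    by apply: ler_piMl; [exact: ltW | rewrite expr2; nra].
  have H3 : rho / 2 * (2 * e / rho) = e by field; rewrite gt_eqF.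
  have Hr2 : 0 <= rho / 2 by rewrite divr_ge0 // ltW.
  have := ler_wpM2l Hr2 H1; have := ler_wpM2l Hr2 H2; move: H3; nra.
have Hr2 : 0 <= rho / 2 * dot (z k.+1 - x k) (z k.+1 - x k) by rewrite mulr_ge0 // divr_ge0 // ltW.
move: Ha Hc Hrt Hr2; lra.
Qed.


Lemma count_S (P : pred nat) K :
  count P (iota 0 K.+1) = (count P (iota 0 K) + (if P K then 1 else 0))%N.
Proof. by rewrite -addn1 iotaD count_cat /= add0n addn0; case: (P K). Qed.

Local Notation desc := (is_descent f beta x z model).
Local Notation h k := (f (x k) - fs).

Lemma h_ge0 k : 0 <= h k. Proof. by rewrite subr_ge0 fs_le. Qed.

Lemma h_desc k t : desc k -> 0 <= t <= 1 ->
  h k.+1 <= h k - beta * (t * h k - rho / 2 * t ^+ 2 * D2).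
Proof.
move=> Hd Ht; rewrite run_x Hd.
have H := Delta_lb k Ht.
move: Hd; rewrite /is_descent => Hd.
have := ler_wpM2l (ltW Hb0) H.
move: Hd; lra.
Qed.

Lemma h_null k : ~~ desc k -> x k.+1 = x k.
Proof. by move=> Hd; rewrite run_x (negbTE Hd). Qed.

Lemma h_noninc k : h k.+1 <= h k.
Proof.
case Hd: (desc k); last by rewrite h_null ?Hd.
have := @h_desc k 0 Hd; rewrite ler01 lexx => /(_ isT).
rewrite mul0r expr0n /= mulr0 mul0r subrr mulr0 subr0; lra.
Qed.

Lemma h_noninc_le i j : (i <= j)%N -> h j <= h i.
Proof.
elim: j => [|j IH]; first by rewrite leqn0 => /eqP ->.
rewrite leq_eqVlt => /orP [/eqP ->|Hij]; first by [].
by apply: le_trans (IH Hij); exact: h_noninc.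
Qed.


Hypothesis HD2 : 0 < D2.
Local Notation a := (rho * D2).

Lemma a_gt0 : 0 < a. Proof. exact: mulr_gt0. Qed.

Lemma reg1 k : desc k -> a <= h k -> h k.+1 <= (1 - beta / 2) * h k.
Proof.
move=> Hd Ha; have := @h_desc k 1 Hd; rewrite ler01 lexx => /(_ isT).
rewrite expr1n mulr1 mul1r => H.
have : beta * (rho / 2 * D2) <= beta * (h k / 2).
  apply: ler_wpM2l; first exact: ltW.
  have -> : rho / 2 * D2 = rho * D2 / 2 by ring.
  move: Ha; set A := rho * D2; lra.
move: H; lra.
Qed.

Lemma reg2 k : desc k -> h k < a -> 2 * a * h k.+1 <= 2 * a * h k - beta * h k ^+ 2.
Proof.
move=> Hd Ha; have Hh := h_ge0 k; have Hap := a_gt0.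
have Ht : 0 <= h k / a <= 1.
  apply/andP; split; first by apply: divr_ge0 => //; exact: ltW.
  by rewrite ler_pdivrMr // mul1r; exact: ltW.
have := h_desc Hd Ht.
have E : h k / a * h k - rho / 2 * (h k / a) ^+ 2 * D2 = h k ^+ 2 / (2 * a).
  by field; rewrite !gt_eqF.
rewrite E => H.
have := ler_wpM2l (ltW (mulr_gt0 (ltr0n _ 2) Hap)) H.
have E2 : 2 * a * (h k - beta * (h k ^+ 2 / (2 * a))) = 2 * a * h k - beta * h k ^+ 2.
  by field; rewrite !gt_eqF.
by rewrite E2.
Qed.

Definition Dc1 k := count (fun j => desc j && (a <= h j)) (iota 0 k).
Definition Dc2 k := count (fun j => desc j && (h j < a)) (iota 0 k).
Local Notation q := (1 - beta / 2).

Lemma invariants k :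
  [/\ count desc (iota 0 k) = (Dc1 k + Dc2 k)%N,
      h k <= q ^+ Dc1 k * h 0%N,
      (0 < Dc1 k)%N -> a <= q ^+ (Dc1 k).-1 * h 0%N,
      (0 < Dc2 k)%N -> h k < a &
      h k < a -> h k * (2 + beta * (Dc2 k)%:R) <= 2 * a].
Proof.
have Hq0 : 0 <= q by have := Hb1; have := Hb0; lra.
elim: k => [|k [IC I1 I1' I3 I2]].
  rewrite /Dc1 /Dc2 /= expr0 mul1r mulr0 addr0; split => //.
  by move=> H; lra.
rewrite /Dc1 /Dc2 !count_S -/(Dc1 k) -/(Dc2 k) in IC I1 I1' I3 I2 *.
case Hd: (desc k) => /=; last first.
  by rewrite !addn0 IC; rewrite h_null ?Hd //.
have Hhk := h_ge0 k; have Hhk1 := h_ge0 k.+1; have Hap := a_gt0.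
have Hnon := h_noninc k.
case: (leP a (h k)) => Ha /=.
  rewrite !addn0 IC !addn1 addSn; split.
  - by [].
  - rewrite exprS -mulrA; apply: le_trans (reg1 Hd Ha) _.
    by apply: ler_wpM2l.
  - by move=> _ /=; apply: le_trans I1.
  - by move=> /I3 H; exfalso; move: H; rewrite ltNge Ha.
  move=> Hlt; case: (posnP (Dc2 k)) => [->|/I3 H]; last first.
    by exfalso; move: H; rewrite ltNge Ha.
  by rewrite mulr0 addr0 mulrC ler_pM2l // ltW.
rewrite !addn0 !addn1 IC addnS; split.
- by [].
- by apply: le_trans Hnon I1.
- exact: I1'.
- by move=> _; apply: le_lt_trans Hnon Ha.
move=> _; have H2 := I2 Ha; have R2 := reg2 Hd Ha.
set c := 2 + beta * (Dc2 k)%:R.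
have Hc : 2 <= c by rewrite /c lerDl mulr_ge0 // ltW.
rewrite /c -/c in H2.
have Hkey : 0 <= (2 * a - h k * c) * (2 * a - beta * h k).
  have Hbh : beta * h k <= h k by rewrite ler_piMl // ltW.
  apply: mulr_ge0; rewrite subr_ge0; first exact: H2.
  apply: (le_trans Hbh); apply: ltW; apply: (lt_le_trans Ha).
  have -> : 2 * a = a + a by ring.
  by rewrite lerDl ltW.
have E : 2 + beta * (Dc2 k).+1%:R = c + beta by rewrite /c -addn1 natrD; ring.
rewrite E.
have : 2 * a * (h k.+1 * (c + beta)) <= 2 * a * (2 * a).
  have Hcb : 0 <= c + beta.
    by apply: addr_ge0; [apply: le_trans Hc; exact: ler0n | exact: ltW].
  have X := ler_wpM2r Hcb R2.
  rewrite mulrA; apply: (le_trans X).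
  have E2 : (2 * a * h k - beta * h k ^+ 2) * (c + beta) =
    2 * a * (2 * a) - (2 * a - h k * c) * (2 * a - beta * h k) - (beta * h k) ^+ 2.
    by ring.
  rewrite E2 -addrA -opprD lerBlDr lerDl; apply: addr_ge0 => //.
  exact: sqr_ge0.
by rewrite ler_pM2l //; apply: mulr_gt0.
Qed.


Lemma L1_facts eps : 0 < eps -> eps <= h 0%N ->
  let L1 := 2 * ln (h 0%N / (rho * D2)) / beta in
  [/\ forall n, (0 < n)%N -> a <= q ^+ n * h 0%N -> n%:R < L1,
      forall n, a <= q ^+ n * h 0%N -> n%:R <= L1 &
      a < h 0%N -> 0 < L1].
Proof.
move=> He He0 L1.
have Hap := a_gt0.
have Hh0 : 0 < h 0%N by apply: lt_le_trans He He0.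
split.
- move=> n Hn H; have Hl := ln_count_lt Hb0 Hb1 Hap Hh0 Hn H.
  rewrite /L1 ltr_pdivlMr // mulrC.
  move: Hl; move: (ln _) => X; move: (n%:R) => Y Hl.
  have : Y * (beta / 2) * 2 = beta * Y by field.
  move: Hl; move: (Y * (beta / 2)) => Z; lra.
- move=> n H; have Hl := ln_count Hb0 Hb1 Hap Hh0 H.
  rewrite /L1 ler_pdivlMr // mulrC.
  move: Hl; move: (ln _) => X; move: (n%:R) => Y Hl.
  have : Y * (beta / 2) * 2 = beta * Y by field.
  move: Hl; move: (Y * (beta / 2)) => Z; lra.
move=> Ha0; rewrite /L1 divr_gt0 // mulr_gt0 // ln_gt0 //.
by rewrite ltr_pdivlMr // mul1r.
Qed.

Lemma desc_count K eps : 0 < eps -> eps <= h 0%N ->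
  (forall k, (k < K)%N -> eps < h k) ->
  (count desc (iota 0 K))%:R <=
    2 * rho * D2 / (beta * eps) + ceil_pos (2 * ln (h 0%N / (rho * D2)) / beta).
Proof.
move=> He He0 HK.
have [F1 F2 F3] := L1_facts He He0.
move: F1 F2 F3.
set L1 := 2 * ln (h 0%N / (rho * D2)) / beta => F1 F2 F3.
have [CL1 C0 Cn] := ceil_pos_props L1.
move: CL1 C0 Cn; move: (ceil_pos L1) => C CL1 C0 Cn.
clearbody L1.
have Hap := a_gt0.
have Hbe : 0 < beta * eps by rewrite mulr_gt0.
have Hh0 : 0 < h 0%N by apply: lt_le_trans He He0.
have EN : 2 * rho * D2 / (beta * eps) = 2 * a / (beta * eps) by rewrite mulrA.
rewrite EN.
have Hfr : 0 <= 2 * a / (beta * eps) by rewrite divr_ge0 // ltW // mulr_gt0.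
case: K HK => [|K] HK; first by rewrite /= addr_ge0.
have HH := HK K (ltnSn K).
have [IC I1 I1' I3 I2] := invariants K.
rewrite count_S IC.
move: I1 I1' I3 I2; move: (Dc1 K) (Dc2 K) => n1 n2 I1 I1' I3 I2.
have Htot : ((n1 + n2 + (if desc K then 1 else 0))%N%:R : R) <= n1%:R + n2%:R + 1.
  by rewrite !natrD lerD2l; case: (desc K).
apply: (le_trans Htot).
have HHh0 : h K <= h 0%N by apply: h_noninc_le.
have FA : forall y, y * (beta * eps) <= 2 * a -> y <= 2 * a / (beta * eps).
  by move=> y Hy; rewrite ler_pdivlMr.
move: (2 * a / (beta * eps)) Hfr FA => F Hfr FA.
have Hbee : beta * eps <= eps by rewrite ler_piMl // ltW.
case: (leP a (h K)) => Ha.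
- have Hn2 : n2 = 0%N.
    by case: (posnP n2) => // /I3 H; exfalso; move: H; rewrite ltNge Ha.
  rewrite Hn2 addr0.
  case: (posnP n1) => Hn1.
  + rewrite Hn1 add0r.
    case: (ltP a (h 0%N)) => Ha0.
    * move: (F3 Ha0) => /(Cn 0%N); rewrite /= => H1.
      by apply: (le_trans H1); rewrite lerDr.
    * have H1 : 1 <= F.
        apply: FA; rewrite mul1r; move: Hbee HH HHh0 Ha0 Hap.
        move: (beta * eps) (h K) (h 0%N) a => B X Y A; lra.
      by apply: (le_trans H1); rewrite lerDl.
  + move: (F1 _ Hn1 (le_trans Ha I1)) => /Cn H1; rewrite -natr1 in H1.
    by apply: (le_trans H1); rewrite lerDr.
- have Hb := I2 Ha.
  have Hn1 : n1%:R <= C + 1.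
    case: (posnP n1) => [->|Hn1]; first by rewrite /= addr_ge0.
    have H1 := F2 _ (I1' Hn1).
    rewrite -(prednK Hn1) -natr1 lerD2r; exact: le_trans H1 CL1.
  have Hn2 : n2%:R + 2 <= F.
    apply: FA.
    have Hn20 := ler0n R n2.
    have E1 : eps * (2 + beta * n2%:R) <= h K * (2 + beta * n2%:R).
      rewrite ler_pM2r ?ltW //.
      by apply: (lt_le_trans (ltr0n R 2)); rewrite lerDl mulr_ge0 // ltW.
    have E2 : (n2%:R + 2) * (beta * eps) <= eps * (2 + beta * n2%:R).
      have E3 : (n2%:R + 2) * (beta * eps) = n2%:R * (beta * eps) + 2 * (beta * eps) by ring.
      have E4 : eps * (2 + beta * n2%:R) = n2%:R * (beta * eps) + 2 * eps by ring.
      rewrite E3 E4; move: Hbee; move: (n2%:R * (beta * eps)) (beta * eps) => P B; lra.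
    by apply: (le_trans E2); apply: (le_trans E1).
  move: Hn1 Hn2; move: (n1%:R) (n2%:R) => Y1 Y2; lra.
Qed.


Definition pv k := model k (z k.+1) + rho / 2 * dot (z k.+1 - x k) (z k.+1 - x k).

Lemma dot_sq_split (A B : V) :
  dot (A + B) (A + B) = dot A A + 2 * dot A B + dot B B.
Proof. rewrite !dotDl !dotDr (dotC B A); ring. Qed.

Lemma pv_null k : ~~ desc k ->
  pv k + rho / 2 * dot (z k.+2 - z k.+1) (z k.+2 - z k.+1) <= pv k.+1.
Proof.
move=> Hn; rewrite /pv (h_null Hn).
have H := run_c3 (z k.+2) Hn.
have E : z k.+2 - x k = (z k.+2 - z k.+1) + (z k.+1 - x k).
  by rewrite addrA subrK.
rewrite E (dot_sq_split (z k.+2 - z k.+1)).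
have E2 : dot (rho *: (x k - z k.+1)) (z k.+2 - z k.+1) =
          - rho * dot (z k.+2 - z k.+1) (z k.+1 - x k).
  by rewrite dotZl dotC -(opprB (z k.+1) (x k)) dotNr; ring.
rewrite E2 in H.
set P := dot (z k.+2 - z k.+1) (z k.+1 - x k) in H *.
set A := dot (z k.+2 - z k.+1) _; set B := dot (z k.+1 - x k) _.
clearbody P A B.
rewrite aux_E3 mulNr in H *.
set rP := rho * P in H *; set rA := rho / 2 * A; set rB := rho / 2 * B.
clearbody rP rA rB; lra.
Qed.

Lemma null_gap k : ~~ desc k.+1 ->
  (1 - beta) * (f (x k.+1) - model k.+1 (z k.+2)) <
    L * dot (z k.+2 - z k.+1) (z k.+2 - z k.+1).
Proof.
move=> Hn.
have H1 : f (x k.+1) - f (z k.+2) < beta * (f (x k.+1) - model k.+1 (z k.+2)).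
  by move: Hn; rewrite /is_descent -ltNge.
have H2 := run_c2 k (z k.+2).
have H3 := smooth_ub (z k.+1) (z k.+2).
set M1 := model k.+1 (z k.+2) in H1 H2 *.
set D := dot (g (z k.+1)) _ in H2 H3.
set Q := L * _ in H3 *.
have E : (1 - beta) * (f (x k.+1) - M1) = (f (x k.+1) - M1) - beta * (f (x k.+1) - M1) by ring.
rewrite E; set BB := beta * _ in H1 *.
clearbody M1 D Q BB; lra.
Qed.


Definition start s := s = 0%N \/ ((0 < s)%N /\ desc s.-1).

Lemma streak_x s n : (forall k, (s <= k < s + n)%N -> ~~ desc k) ->
  forall j, (j <= n)%N -> x (s + j)%N = x s.
Proof.
move=> Hs; elim => [|j IH] Hj; first by rewrite addn0.
rewrite addnS h_null; first by apply: IH; exact: ltnW.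
by apply: Hs; rewrite leq_addr /= ltn_add2l.
Qed.

Lemma start_model s : start s -> forall y,
  f (x s) + dot (g (x s)) (y - x s) <= model s y.
Proof.
case => [->|[Hs Hd]] y; first by rewrite run_m0.
move: Hd; case: s Hs => // j _ /= Hd.
by rewrite run_x Hd; apply: run_c2.
Qed.

Lemma Gs_ub s : start s ->
  f (x s) - pv s <= dot (g (x s)) (g (x s)) / (2 * rho).
Proof.
move=> Hs; rewrite /pv.
have H1 := start_model Hs (z s.+1).
set w := z s.+1 - x s in H1 *.
set a0 := g (x s) in H1 *.
have H2 := dot_ge0 (a0 + rho *: w).
have E : dot (a0 + rho *: w) (a0 + rho *: w) =
  dot a0 a0 + 2 * rho * dot a0 w + rho ^+ 2 * dot w w.
  by rewrite dot_sq_split !dotZr !dotZl; ring.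
rewrite E in H2.
have H3 := aux_G Hrho H2.
move: H1 H3; move: (model s (z s.+1)) (dot a0 w) (dot a0 a0 / (2 * rho)) (rho / 2 * dot w w) => M1 X Y Z.
lra.
Qed.

Local Notation c0 s := (dot (g (x s)) (g (x s)) / (2 * (2 * L + rho))).

Lemma G_lb s k : x k = x s -> c0 s <= f (x s) - pv k.
Proof.
move=> Hk; rewrite /pv Hk.
set a0 := g (x s).
set t := 1 / (2 * L + rho).
set y := x s - t *: a0.
have H1 := arg_f k y; rewrite Hk in H1.
have Ey : y - x s = - (t *: a0) by rewrite /y addrAC subrr add0r.
have Ed : dot (y - x s) (y - x s) = t ^+ 2 * dot a0 a0.
  by rewrite Ey dotN dotZl dotZr; ring.
have Ed2 : dot a0 (y - x s) = - (t * dot a0 a0) by rewrite Ey dotNr dotZr.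
rewrite Ed in H1.
have H2 := smooth_ub (x s) y.
rewrite -/a0 Ed Ed2 in H2.
have E := aux_c0 (dot a0 a0) HL Hrho; rewrite -/t in E.
have E' : - t * dot a0 a0 + (L + rho / 2) * (t ^+ 2 * dot a0 a0) =
  - (t * dot a0 a0) + L * (t ^+ 2 * dot a0 a0) + rho / 2 * (t ^+ 2 * dot a0 a0) by ring.
rewrite E' in E.
move: H1 H2 E.
move: (model k (z k.+1)) (rho / 2 * dot (z k.+1 - x s) (z k.+1 - x s)) (f y)
  (t * dot a0 a0) (L * (t ^+ 2 * dot a0 a0)) (rho / 2 * (t ^+ 2 * dot a0 a0))
  (dot a0 a0 / (2 * (2 * L + rho))) => M1 P Fy T1 T2 T3 C.
lra.
Qed.


Lemma pair_dec s k : x k = x s -> ~~ desc k -> ~~ desc k.+1 ->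
  rho * (1 - beta) * c0 s <= 2 * L * ((f (x s) - pv k) - (f (x s) - pv k.+1)).
Proof.
move=> Hk Hn1 Hn2.
have P := pv_null Hn1.
have Ng := null_gap Hn2.
have Hk1 : x k.+1 = x s by rewrite h_null.
have Gl := G_lb Hk1.
rewrite Hk1 in Ng.
have Hpm : model k.+1 (z k.+2) <= pv k.+1.
  rewrite /pv lerDl; apply: mulr_ge0; [apply: divr_ge0 => //; exact: ltW | exact: dot_ge0].
set dd := dot (z k.+2 - z k.+1) (z k.+2 - z k.+1) in P Ng *.
have Hb : 0 <= 1 - beta by have := Hb1; have := Hb0; lra.
have A1 : (1 - beta) * c0 s <= L * dd.
  apply: ltW; apply: le_lt_trans Ng; apply: ler_wpM2l => //.
  move: Gl Hpm; move: (c0 s) (pv k.+1) (model k.+1 (z k.+2)) (f (x s)) => C Pv M F; lra.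
have A2 := ler_wpM2l (ltW Hrho) A1.
have A3 : L * (rho / 2 * dd) <= L * (pv k.+1 - pv k).
  by apply: ler_wpM2l => //; move: P; move: (pv k) (pv k.+1) (rho / 2 * dd) => X Y Z; lra.
have E1 : rho * (1 - beta) * c0 s = rho * ((1 - beta) * c0 s) by ring.
have E2 : rho * (L * dd) = 2 * (L * (rho / 2 * dd)).
  have H22 : (2 : R) != 0 by rewrite gt_eqF.
  by field.
have E3 : 2 * L * ((f (x s) - pv k) - (f (x s) - pv k.+1)) = 2 * (L * (pv k.+1 - pv k)) by ring.
rewrite E1 E3; rewrite E2 in A2.
move: A2 A3; move: (rho * ((1 - beta) * c0 s)) (L * (rho / 2 * dd)) (L * (pv k.+1 - pv k)) => X Y Z.
lra.
Qed.

Lemma telescope s n : (forall k, (s <= k < s + n)%N -> ~~ desc k) ->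
  forall m, (m < n)%N ->
  m%:R * (rho * (1 - beta) * c0 s) <= 2 * L * ((f (x s) - pv s) - (f (x s) - pv (s + m)%N)).
Proof.
move=> Hs; elim => [|m IH] Hm.
  by rewrite mul0r addn0 subrr mulr0.
have IH' := IH (ltnW Hm).
have Hx := streak_x Hs (ltnW (ltnW Hm)).
have Hn1 : ~~ desc (s + m)%N by apply: Hs; rewrite leq_addr /= ltn_add2l ltnW.
have Hn2 : ~~ desc (s + m).+1 by apply: Hs; rewrite -addnS leq_addr /= ltn_add2l.
have Hp := pair_dec Hx Hn1 Hn2.
rewrite addnS -natr1.
have E : forall A B C : R, 2 * L * (A - C) = 2 * L * (A - B) + 2 * L * (B - C) by move=> *; ring.
rewrite (E _ (f (x s) - pv (s + m)%N)).
move: IH' Hp.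
move: (2 * L * ((f (x s) - pv s) - (f (x s) - pv (s + m)%N)))
      (2 * L * ((f (x s) - pv (s + m)%N) - (f (x s) - pv (s + m).+1)))
      (rho * (1 - beta) * c0 s) (m%:R) => X Y Z W.
have E' : (W + 1) * Z = W * Z + Z by ring.
rewrite E'; lra.
Qed.


Local Notation M := (16 * (L + rho) ^+ 3 / ((1 - beta) ^+ 2 * rho ^+ 3)).

Lemma run_bound s n : start s -> (forall k, (s <= k < s + n)%N -> ~~ desc k) ->
  (0 < n)%N -> 0 < h s -> n%:R <= M.
Proof.
move=> Hst Hs Hn Hh.
set AA := dot (g (x s)) (g (x s)).
have HA : 0 < AA.
  rewrite lt0r dot_ge0 andbT; apply/eqP => H0.
  have Hg := dot0_eq H0.
  have [[xs Hxs] _] := fstar_prop.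
  have := Hsub (x s) xs; rewrite Hg dot0l addr0 Hxs => Hle.
  by move: Hh; rewrite subr_gt0 ltNge Hle.
have Hn1 : (n.-1 < n)%N by rewrite prednK.
have T := telescope Hs Hn1.
have Gs := Gs_ub Hst.
have Hx := streak_x Hs (leq_pred n).
have Gl := G_lb Hx.
have Hc0 : 0 <= c0 s by apply: divr_ge0; [exact: ltW | apply: mulr_ge0 => //; apply: addr_ge0; [apply: mulr_ge0 | exact: ltW]].
have E : 2 * L * (AA / (2 * rho)) = L * AA / rho.
  have H22 : (2 : R) != 0 by rewrite gt_eqF.
  by field; rewrite gt_eqF.
have B : 2 * L * ((f (x s) - pv s) - (f (x s) - pv (s + n.-1)%N)) <= L * AA / rho.
  rewrite -E; apply: ler_wpM2l; first by apply: mulr_ge0.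
  move: Gs Gl Hc0; rewrite -/AA.
  move: (f (x s) - pv s) (f (x s) - pv (s + n.-1)%N) (c0 s) (AA / (2 * rho)) => X Y C Z; lra.
have F := aux_final HL Hrho Hb0 Hb1 HA (ler0n R n.-1) (le_trans T B).
by rewrite -(prednK Hn) -natr1.
Qed.


Lemma M_ge0 : 0 <= M.
Proof.
apply: divr_ge0; first by apply: mulr_ge0 => //; apply: exprn_ge0; apply: addr_ge0 => //; exact: ltW.
by apply: mulr_ge0; apply: exprn_ge0; [have := Hb1; lra | exact: ltW].
Qed.

Local Notation nulls K := (count (fun k => ~~ desc k) (iota 0 K)).

Lemma tail_bound eps K s : 0 < eps -> (forall k, (k < K)%N -> eps < h k) ->
  (s <= K)%N -> start s -> (forall k, (s <= k < K)%N -> ~~ desc k) ->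
  (K - s)%:R <= M.
Proof.
move=> He HK HsK Hst Hs.
case: (posnP (K - s)) => [->|Hp]; first exact: M_ge0.
have Hsk : (s < K)%N by rewrite -subn_gt0.
have Hhs : 0 < h s by apply: (lt_trans He (HK s Hsk)).
apply: (run_bound Hst _ Hp Hhs) => k Hk; apply: Hs.
by rewrite subnKC in Hk.
Qed.

Lemma null_inv eps K : 0 < eps -> (forall k, (k < K)%N -> eps < h k) ->
  forall K', (K' <= K)%N -> exists s, [/\ (s <= K')%N, start s,
    (forall k, (s <= k < K')%N -> ~~ desc k) &
    (nulls K')%:R <= M * (count desc (iota 0 K'))%:R + (K' - s)%:R].
Proof.
move=> He HK; elim => [|K' IH] HK'.
  exists 0%N; split.
  - by [].
  - by left.
  - by move=> k /andP [H1 H2]; move: (leq_trans H2 H1); rewrite ltnn.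
  - by rewrite /= mulr0 add0r.
have [s [HsK Hst Hs Hc]] := IH (ltnW HK').
rewrite !count_S.
case Hd: (desc K') => /=.
- exists K'.+1; split.
  + by [].
  + by right; split.
  + by move=> k /andP [H1 H2]; move: (leq_trans H2 H1); rewrite ltnn.
  rewrite subnn addn0 addr0 natrD mulrDr mulr1.
  apply: (le_trans Hc); rewrite lerD2l.
  apply: (tail_bound He (K := K')) => //.
  by move=> k Hk; apply: HK; apply: ltn_trans HK'.
- exists s; split.
  + exact: leqW.
  + exact: Hst.
  + move=> k /andP [H1 H2]; rewrite ltnS leq_eqVlt in H2.
    case/orP: H2 => [/eqP ->|H2]; first by rewrite Hd.
    by apply: Hs; rewrite H1.
  rewrite addn0.
  have E1 : ((nulls K' + 1)%N%:R : R) = (nulls K')%:R + 1 by rewrite natrD.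
  have E2 : ((K'.+1 - s)%N%:R : R) = (K' - s)%:R + 1 by rewrite subSn // -addn1 natrD.
  rewrite E1 E2.
  move: Hc; move: ((nulls K')%:R) (M * _) ((K' - s)%:R) => A B C; lra.
Qed.

Lemma main_sec eps K : 0 < eps -> eps <= h 0%N ->
  (forall k, (k < K)%N -> eps < h k) ->
  let N := 2 * rho * D2 / (beta * eps)
           + ceil_pos (2 * ln ((f (x 0%N) - fs) / (rho * D2)) / beta) in
    (count desc (iota 0 K))%:R <= N /\
    (nulls K)%:R <= M * (N + 1).
Proof.
move=> He He0 HK N.
have Hd := desc_count He He0 HK.
split; first exact: Hd.
have [s [HsK Hst Hs Hc]] := null_inv He HK (leqnn K).
have Ht := tail_bound He HK HsK Hst Hs.
apply: (le_trans Hc); rewrite mulrDr mulr1.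
by apply: lerD => //; apply: ler_wpM2l => //; exact: M_ge0.
Qed.

End Main.

Theorem theorem2 (R : realType) (d : nat) (f : 'rV[R]_d -> R)
  (grad : 'rV[R]_d -> 'rV[R]_d) (L : R) (g : 'rV[R]_d -> 'rV[R]_d)
  (beta rho : R) (x z : nat -> 'rV[R]_d) (model : nat -> 'rV[R]_d -> R) :
  convex_fun f ->
  is_gradient f grad ->
  0 <= L ->
  (forall u v, enorm (grad u - grad v) <= L * enorm (u - v)) ->
  attains_min f ->
  (forall u, is_subgrad f u (g u)) ->
  0 < beta < 1 -> 0 < rho ->
  PBM_run f g beta rho x z model ->
  has_ubound (range (fun k => dist (x k) (Xstar f) ^+ 2)) ->
  let D2 := sup (range (fun k => dist (x k) (Xstar f) ^+ 2)) in
  0 < D2 ->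
  forall eps : R, 0 < eps -> eps <= f (x 0%N) - fstar f ->
  let N := 2 * rho * D2 / (beta * eps)
           + ceil_pos (2 * ln ((f (x 0%N) - fstar f) / (rho * D2)) / beta) in
  forall K : nat, (forall k, (k < K)%N -> eps < f (x k) - fstar f) ->
    (count (is_descent f beta x z model) (iota 0 K))%:R <= N /\
    (count (fun k => ~~ is_descent f beta x z model k) (iota 0 K))%:R
      <= 16 * (L + rho) ^+ 3 / ((1 - beta) ^+ 2 * rho ^+ 3) * (N + 1).
Proof.
move=> Hf Hg HL Hl Hm Hs /andP [Hb0 Hb1] Hr Hrun Hub D2 HD2 eps He He0 N K HK.
exact: (main_sec Hf Hg HL Hl Hs Hb0 Hb1 Hr Hrun Hm Hub HD2 He He0 HK).
Qed.
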